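(* There exists an invertible $19\times19$ binary matrix such that the corresponding linear kernel has partial distance sequence $(1,2,2,2,2,2,4,4,4,4,4,6,8,8,8,8,8,8,16)$. Consequently $E_{19}\ge\frac1{19}\sum_{i=0}^{18}\log_{19}D_{min}^{(i)}\approx0.49045$.
   Context: A kernel of dimension $\ell$ is a bijection $g:\{0,1\}^\ell\to\{0,1\}^\ell$; a linear kernel is $g({\bf u})={\bf u}G$ over $\mathbb{F}_2$ for an invertible $\ell\times\ell$ binary matrix $G$. ${\bf a}\bullet{\bf b}$ denotes concatenation, $d_H$ Hamming distance. Partial distances: $D_{min}^{(i)}=\min\{d_H(g({\bf w}\bullet 0\bullet{\bf u}),g({\bf w}\bullet 1\bullet {\bf v})) : {\bf w}\in\{0,1\}^i,\ {\bf u},{\bf v}\in\{0,1\}^{\ell-i-1}\}$, $i=0,\dots,\ell-1$; exponent $E(g)=\frac1\ell\sum_{i}\log_\ell D_{min}^{(i)}$; $E_\ell=\max_g E(g)$ over all kernels of dimension $\ell$. *)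

(* Defs.v *)
From Stdlib Require Import Reals.
From mathcomp Require Import all_boot all_order all_algebra all_fingroup.
Local Open Scope nat_scope.
Set Implicit Arguments. Unset Strict Implicit. Unset Printing Implicit Defensive.

Definition dH (l : nat) (x y : 'rV['F_2]_l) : nat := #|[set j | x ord0 j != y ord0 j]|.

Definition kernel (l : nat) := {perm 'rV['F_2]_l}.

Definition linker (l : nat) (G : 'M['F_2]_l) : 'rV['F_2]_l -> 'rV['F_2]_l :=
  fun u => mulmx u G.

(* x = w . 0 . u and y = w . 1 . v for some w of length i (and arbitrary u, v):
   x, y agree on positions < i, x_i = 0, y_i = 1. *)
Definition split_pair (l : nat) (i : 'I_l) (x y : 'rV['F_2]_l) : bool :=
  [forall j : 'I_l, (j < i)%N ==> (x ord0 j == y ord0 j)] && (x ord0 i == 0%R) && (y ord0 i == 1%R).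

(* Partial distance D_min^(i) of g.  The minimum is taken with initial value l,
   which does not change it since all Hamming distances are <= l and the
   range of (x,y) is nonempty. *)
Definition Dmin (l : nat) (g : 'rV['F_2]_l -> 'rV['F_2]_l) (i : 'I_l) : nat :=
  \big[minn/l]_(x : 'rV['F_2]_l) \big[minn/l]_(y : 'rV['F_2]_l | split_pair i x y)
     dH (g x) (g y).

Definition Rsum_ord (l : nat) (f : 'I_l -> R) : R :=
  foldr Rplus R0 (map f (enum 'I_l)).

Definition logb (l : nat) (x : R) : R := Rdiv (ln x) (ln (INR l)).

Definition exponent (l : nat) (g : 'rV['F_2]_l -> 'rV['F_2]_l) : R :=
  Rmult (Rinv (INR l)) (Rsum_ord (fun i : 'I_l => logb l (INR (Dmin g i)))).

(* E_l = max over all kernels of dimension l (finite, nonempty; each E(g) >= 0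
   since D_min >= 1 for a bijection, so initial value 0 is harmless). *)
Definition Emax (l : nat) : R :=
  foldr Rmax R0 (map (fun g : kernel l => exponent (fun u => g u)) (enum (kernel l))).

(* Main.v *)
Require Import Defs.
From Stdlib Require Import Reals FunctionalExtensionality.
From mathcomp Require Import all_boot all_order all_algebra all_fingroup.
Import GRing.Theory.
Local Open Scope ring_scope.
Lemma F2_cases (x : 'F_2) : x = 0 \/ x = 1.
Proof. case: x => [[|[|k]] Hk]; [left|right|by []]; exact: val_inj. Qed.
Lemma F2_add_self (x : 'F_2) : x + x = 0.
Proof. by case: (F2_cases x) => [->|->]; apply: val_inj. Qed.
Lemma F2_opp (x : 'F_2) : - x = x.
Proof. by case: (F2_cases x) => [->|->]; apply: val_inj. Qed.
Lemma F2_bool (b : bool) : ((b : nat)%:R : 'F_2) != 0 = b.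
Proof. by case: b. Qed.
Lemma F2_xor (a b : bool) : (((a (+) b) : nat)%:R : 'F_2) = (a : nat)%:R + (b : nat)%:R.
Proof. by case: a; case: b; apply: val_inj. Qed.
Lemma ie_enum (l : nat) : index_enum 'I_l = enum 'I_l.
Proof. by rewrite -[LHS]filter_predT deprecated_filter_index_enum. Qed.
Lemma ie_enum2 (l : nat) : index_enum 'I_l = enum 'I_l.
Proof. by rewrite /index_enum unlock enumT. Qed.
Lemma card_nth (l : nat) (a : seq bool) : size a = l ->
  #|[set j : 'I_l | nth false a j]| = count id a.
Proof.
move=> Ha. rewrite cardsE cardE /enum_mem size_filter -enumT.
rewrite -(count_map val (fun n => nth false a n)) /= val_enum_ord.
rewrite -Ha -{3}(mkseq_nth false a) /mkseq count_map. by [].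
Qed.
Definition wtM {l} (v : 'rV['F_2]_l) : nat := #|[set j | v ord0 j != 0]|.
Fixpoint Mmn {l} (acc : 'rV['F_2]_l) (rs : seq 'rV['F_2]_l) : nat :=
  match rs with
  | [::] => wtM acc
  | r :: rs' => minn (Mmn acc rs') (Mmn (acc + r) rs')
  end.

Lemma Mmn_le l (acc : 'rV['F_2]_l) (s : seq 'I_l) (f : 'I_l -> 'rV['F_2]_l) (c : 'I_l -> 'F_2) :
  (Mmn acc (map f s) <= wtM (acc + \sum_(k <- s) c k *: f k))%N.
Proof.
elim: s acc => [|k s IH] acc /=; first by rewrite big_nil addr0.
rewrite big_cons; case: (F2_cases (c k)) => ->.
- by rewrite scale0r add0r; apply: leq_trans (geq_minl _ _) (IH acc).
- by rewrite scale1r addrA; apply: leq_trans (geq_minr _ _) (IH (acc + f k)).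
Qed.

Lemma Mmn_ex l (acc : 'rV['F_2]_l) (s : seq 'I_l) (f : 'I_l -> 'rV['F_2]_l) : uniq s ->
  exists c : 'I_l -> 'F_2, wtM (acc + \sum_(k <- s) c k *: f k) = Mmn acc (map f s).
Proof.
elim: s acc => [|k s IH] acc /= Hu.
  by exists (fun _ => 0); rewrite big_nil addr0.
move/andP: Hu => [Hk Hu].
have Heq : forall (c : 'I_l -> 'F_2) (b : 'F_2),
  \sum_(j <- s) (if j == k then b else c j) *: f j = \sum_(j <- s) c j *: f j.
  move=> c b; apply: eq_big_seq => j Hj.
  by have -> : (j == k) = false by apply/eqP => E; move: Hk; rewrite -E Hj.
case: (leqP (Mmn acc (map f s)) (Mmn (acc + f k) (map f s))) => H.
- have [c Hc] := IH acc Hu.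
  exists (fun j => if j == k then 0 else c j).
  rewrite big_cons eqxx scale0r add0r Heq Hc.
  by [].
- have [c Hc] := IH (acc + f k) Hu.
  exists (fun j => if j == k then 1 else c j).
  rewrite big_cons eqxx scale1r addrA Heq Hc.
  by [].
Qed.
Definition sidx {l} (i : 'I_l) : seq 'I_l := [seq k : 'I_l <- index_enum 'I_l | (i < k)%N].

Lemma decomp l (G : 'M['F_2]_l) (i : 'I_l) (z : 'rV['F_2]_l) :
  z ord0 i = 1 -> (forall j : 'I_l, (j < i)%N -> z ord0 j = 0) ->
  z *m G = row i G + \sum_(k <- sidx i) z ord0 k *: row k G.
Proof.
move=> Hi Hlt; rewrite mulmx_sum_row (bigID (fun k : 'I_l => (i < k)%N)) /= addrC.
rewrite /sidx big_filter; congr (_ + _).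
rewrite (bigD1 i) ?ltnn //= Hi scale1r big1 ?addr0 // => j /andP [Hj Hne].
rewrite Hlt ?scale0r // ltn_neqAle leqNgt Hj andbT.
by rewrite val_eqE.
Qed.

Lemma dH_wt l (x y : 'rV['F_2]_l) : dH x y = wtM (x - y).
Proof. by rewrite /dH /wtM; apply: eq_card => j; rewrite !inE !mxE subr_eq0. Qed.

Lemma wtM_opp l (x : 'rV['F_2]_l) : wtM (- x) = wtM x.
Proof. by rewrite /wtM; apply: eq_card => j; rewrite !inE mxE oppr_eq0. Qed.

Definition MM {l} (G : 'M['F_2]_l) (i : 'I_l) : nat :=
  Mmn (row i G) (map (fun k => row k G) (sidx i)).

Lemma lowerb l (G : 'M['F_2]_l) (i : 'I_l) x y : split_pair i x y ->
  (MM G i <= dH (linker G x) (linker G y))%N.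
Proof.
move=> /andP [/andP [/forallP Hpre /eqP Hx] /eqP Hy].
rewrite dH_wt /linker -mulmxBl.
have -> : (x - y) *m G = row i G + \sum_(k <- sidx i) (x - y) ord0 k *: row k G.
  apply: decomp; first by rewrite !mxE Hx Hy sub0r F2_opp.
  move=> j Hj; rewrite !mxE; move/implyP: (Hpre j) => /(_ Hj)/eqP ->.
  by rewrite subrr.
exact: Mmn_le.
Qed.

Lemma upperb l (G : 'M['F_2]_l) (i : 'I_l) : exists x y, split_pair i x y /\
  dH (linker G x) (linker G y) = MM G i.
Proof.
have [c Hc] := @Mmn_ex l (row i G) (sidx i) (fun k => row k G) (filter_uniq (fun k : 'I_l => (i < k)%N) (index_enum_uniq 'I_l)).
pose y : 'rV['F_2]_l := \row_k (if k == i then 1 else if (i < k)%N then c k else 0).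
exists 0, y; split.
  rewrite /split_pair; apply/andP; split; [apply/andP; split|].
  - apply/forallP => j; apply/implyP => Hj; rewrite !mxE.
    have -> : (j == i) = false by apply/negbTE; rewrite -val_eqE /= neq_ltn Hj.
    by rewrite ltnNge ltnW.
  - by rewrite mxE.
  - by rewrite mxE eqxx.
rewrite dH_wt /linker mul0mx sub0r wtM_opp.
rewrite (@decomp l G i y); first last.
- move=> j Hj; rewrite mxE.
  have -> : (j == i) = false by apply/negbTE; rewrite -val_eqE /= neq_ltn Hj.
  by rewrite ltnNge ltnW.
- by rewrite mxE eqxx.
rewrite /MM -Hc; congr (wtM (_ + _)).
apply: eq_big_seq => k; rewrite mem_filter => /andP [Hk _]; rewrite mxE.
have -> : (k == i) = false by apply/negbTE; rewrite -val_eqE /= neq_ltn Hk orbT.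
by rewrite Hk.
Qed.

Lemma bigmin_le (T : eqType) (r : seq T) (P : pred T) (F : T -> nat) m x :
  x \in r -> P x -> (\big[minn/m]_(y <- r | P y) F y <= F x)%N.
Proof.
elim: r => // a r IH; rewrite inE big_cons => /orP [/eqP <- | Hr] Px.
  by rewrite Px geq_minl.
case: (P a); last exact: IH.
exact: leq_trans (geq_minr _ _) (IH Hr Px).
Qed.

Lemma Dmin_char l (g : 'rV['F_2]_l -> 'rV['F_2]_l) (i : 'I_l) m : (m <= l)%N ->
  (forall x y, split_pair i x y -> m <= dH (g x) (g y))%N ->
  (exists x y, split_pair i x y /\ dH (g x) (g y) = m) -> Dmin g i = m.
Proof.
move=> Hml Hlow [x [y [Hs Hd]]]; apply/eqP; rewrite eqn_leq; apply/andP; split.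
  rewrite /Dmin -Hd.
  apply: leq_trans (bigmin_le _ _ _ _ _ x (mem_index_enum x) isT) _.
  exact: bigmin_le (mem_index_enum y) Hs.
rewrite /Dmin; apply: (big_ind (fun v => m <= v)%N) => //.
  by move=> a b Ha Hb; rewrite leq_min Ha Hb.
move=> x' _; apply: (big_ind (fun v => m <= v)%N) => //.
  by move=> a b Ha Hb; rewrite leq_min Ha Hb.
by move=> y'; apply: Hlow.
Qed.

Lemma Dmin_MM l (G : 'M['F_2]_l) (i : 'I_l) : Dmin (linker G) i = MM G i.
Proof.
have [x [y [Hs Hd]]] := @upperb l G i.
apply: Dmin_char.
- by rewrite -Hd /dH; apply: leq_trans (max_card _) _; rewrite card_ord.
- by move=> x' y'; apply: lowerb.
- by exists x, y.
Qed.
Fixpoint xorl (a b : seq bool) : seq bool :=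
  match a, b with
  | x :: a', y :: b' => (x (+) y) :: xorl a' b'
  | [::], _ => b
  | _, [::] => a
  end.
Fixpoint mn (acc : seq bool) (rs : seq (seq bool)) : nat :=
  match rs with
  | [::] => count id acc
  | r :: rs' => minn (mn acc rs') (mn (xorl acc r) rs')
  end.
Definition tr {l} (a : seq bool) : 'rV['F_2]_l := \row_j ((nth false a j : nat)%:R).

Lemma nth_xorl a b j : nth false (xorl a b) j = nth false a j (+) nth false b j.
Proof. by elim: a b j => [|x a IH] [|y b] [|j] //=; rewrite ?addbF. Qed.

Lemma size_xorl a b : size a = size b -> size (xorl a b) = size a.
Proof. by elim: a b => [|x a IH] [|y b] //= [] /IH ->. Qed.

Lemma tr_xor l a b : (tr (xorl a b) : 'rV['F_2]_l) = tr a + tr b.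
Proof. by apply/rowP => j; rewrite !mxE nth_xorl F2_xor. Qed.

Lemma tr_wt l a : size a = l -> wtM (tr a : 'rV['F_2]_l) = count id a.
Proof.
move=> Ha; rewrite /wtM -(@card_nth l a Ha); apply: eq_card => j.
by rewrite !inE mxE F2_bool.
Qed.

Lemma Mmn_tr l a bs : size a = l -> all (fun b => size b == l) bs ->
  Mmn (tr a : 'rV['F_2]_l) (map tr bs) = mn a bs.
Proof.
elim: bs a => [|b bs IH] a Ha /=; first by move=> _; apply: tr_wt.
move/andP => [/eqP Hb Hall]; rewrite -tr_xor !IH //.
by rewrite size_xorl // Ha Hb.
Qed.

Lemma inj_unit l (G : 'M['F_2]_l) : injective (linker G) -> G \in unitmx.
Proof.
move=> Hinj.
pose H : 'M['F_2]_l := \matrix_(k, j) (finv (linker G) (row k 1%:M)) ord0 j.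
have HG : H *m G = 1%:M.
  apply/row_matrixP => k; rewrite row_mul.
  have -> : row k H = finv (linker G) (row k 1%:M) by apply/rowP => j; rewrite !mxE.
  exact: (f_finv Hinj (row k 1%:M)).
by case: (mulmx1_unit HG).
Qed.

Lemma wtM0 l : wtM (0 : 'rV['F_2]_l) = 0%N.
Proof. by apply/eqP; rewrite cards_eq0; apply/eqP/setP => j; rewrite !inE mxE eqxx. Qed.

Lemma inj_of_pos l (G : 'M['F_2]_l) : (forall i, 0 < MM G i)%N -> injective (linker G).
Proof.
move=> Hpos x y Hxy; case: (eqVneq x y) => // Hne; exfalso.
have Hex : [exists j, x ord0 j != y ord0 j].
  apply: contraT; rewrite negb_exists => /forallP H.
  have E : x = y by apply/rowP => j; move: (H j); rewrite negbK => /eqP.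
  by move: Hne; rewrite E eqxx.
case/existsP: Hex => j0 Hj0.
case: (@arg_minnP _ j0 (fun j => x ord0 j != y ord0 j) val Hj0) => i Hi Hmin.
have Hpre : forall j : 'I_l, (j < i)%N -> x ord0 j = y ord0 j.
  move=> j Hj; apply/eqP; apply: contraT => Hn.
  by move: (Hmin j Hn); rewrite leqNgt Hj.
have Hd0 : forall a b, split_pair i a b -> linker G a = linker G b -> False.
  move=> a b Hs Hab; move: (@lowerb l G i a b Hs); rewrite Hab dH_wt subrr wtM0.
  by rewrite leqn0 => /eqP H0; move: (Hpos i); rewrite H0.
have Hsp : forall a b : 'rV['F_2]_l, (forall j : 'I_l, (j < i)%N -> a ord0 j = b ord0 j) ->
    a ord0 i = 0 -> b ord0 i = 1 -> split_pair i a b.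
  move=> a b Hab Ha Hb; rewrite /split_pair Ha Hb !eqxx !andbT.
  by apply/forallP => j; apply/implyP => Hj; rewrite Hab.
case: (F2_cases (x ord0 i)) => Hx; case: (F2_cases (y ord0 i)) => Hy.
- by move: Hi; rewrite Hx Hy eqxx.
- exact: (Hd0 x y (Hsp x y Hpre Hx Hy) Hxy).
- by apply: (Hd0 y x (Hsp y x (fun j Hj => esym (Hpre j Hj)) Hy Hx)).
- by move: Hi; rewrite Hx Hy eqxx.
Qed.

Lemma foldr_Rmax (T : eqType) (F : T -> R) s x :
  x \in s -> Rle (F x) (foldr Rmax R0 (map F s)).
Proof.
elim: s => // a s IH; rewrite inE => /orP [/eqP -> | H] /=.
  exact: Rmax_l.
exact: Rle_trans (IH H) (Rmax_r _ _).
Qed.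
Definition B : seq (seq bool) := [::
  [:: true; true; false; false; false; false; true; true; false; false; true; false; false; false; true; true; true; false; true];
  [:: false; false; false; false; true; true; true; false; true; false; true; true; true; false; true; false; false; false; false];
  [:: false; true; false; true; false; true; true; true; true; true; false; false; false; false; false; false; true; false; false];
  [:: false; false; true; false; false; false; false; true; true; true; false; false; false; true; false; true; true; true; false];
  [:: false; true; false; true; false; false; true; false; false; true; false; false; false; true; false; true; true; true; false];
  [:: true; false; true; false; true; false; true; true; true; true; true; false; false; false; true; true; true; true; false];
  [:: true; true; true; true; false; false; false; true; true; false; true; true; false; true; true; false; true; true; false];
  [:: false; false; false; true; false; false; true; false; true; true; false; true; true; true; false; true; true; true; false];
  [:: true; false; true; false; false; true; false; false; true; true; false; false; false; true; true; false; true; true; true];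
  [:: false; true; true; false; false; false; true; false; false; false; true; false; false; true; false; true; true; true; false];
  [:: false; true; false; true; false; true; false; true; false; true; true; false; true; true; false; false; true; false; true];
  [:: true; false; false; true; false; false; true; false; false; true; false; true; false; false; false; true; true; false; true];
  [:: true; false; false; false; true; true; true; false; true; false; false; false; true; true; false; true; false; false; false];
  [:: true; false; true; true; true; false; true; true; true; false; true; false; true; false; false; true; false; true; true];
  [:: false; false; false; false; false; true; true; true; true; true; false; false; true; false; true; false; true; false; false];
  [:: true; true; false; true; false; true; false; true; false; false; false; true; false; true; true; true; true; true; true];
  [:: false; false; false; true; true; false; true; true; false; true; true; false; false; false; false; false; true; false; true];
  [:: true; true; false; true; false; true; true; true; true; false; true; false; true; true; true; false; false; true; false];
  [:: true; true; true; true; true; true; true; true; false; true; true; true; true; true; false; false; true; true; true]].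

Definition dsl : seq nat := [:: 1; 2; 2; 2; 2; 2; 4; 4; 4; 4; 4; 6; 8; 8; 8; 8; 8; 8; 16]%N.

Definition G0 : 'M['F_2]_19 := \matrix_(i, j) ((nth false (nth [::] B i) j : nat)%:R).

Lemma rowG (k : 'I_19) : row k G0 = tr (nth [::] B k).
Proof. by apply/rowP => j; rewrite !mxE. Qed.

Lemma allok : all (fun i => [&& mn (nth [::] B i) (map (nth [::] B) [seq n <- iota 0 19 | (i < n)%N]) == nth 0%N dsl i,
   (0 < nth 0%N dsl i)%N, size (nth [::] B i) == 19
   & all (fun b => size b == 19) (map (nth [::] B) [seq n <- iota 0 19 | (i < n)%N])]) (iota 0 19).
Proof. vm_compute. reflexivity. Qed.

Lemma map_sidx (i : 'I_19) : map (fun k => row k G0) (sidx i) =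
  map tr (map (nth [::] B) [seq n <- iota 0 19 | (i < n)%N]).
Proof.
have Hv : map val (sidx i) = [seq n <- iota 0 19 | (i < n)%N].
  by rewrite /sidx ie_enum -val_enum_ord filter_map.
rewrite -Hv -!map_comp; apply: eq_map => k /=; exact: rowG.
Qed.

Lemma HD (i : 'I_19) : Dmin (linker G0) i = nth 0%N dsl i.
Proof.
have Hi : (i : nat) \in iota 0 19 by rewrite mem_iota ltn_ord.
move/allP: allok => /(_ i Hi) /and4P [/eqP H1 _ /eqP H2 H3].
by rewrite Dmin_MM /MM map_sidx rowG Mmn_tr.
Qed.

Lemma Hpos (i : 'I_19) : (0 < MM G0 i)%N.
Proof.
have Hi : (i : nat) \in iota 0 19 by rewrite mem_iota ltn_ord.
move/allP: allok => /(_ i Hi) /and4P [_ H _ _].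
by rewrite -Dmin_MM HD.
Qed.

Local Close Scope ring_scope.

Theorem mainTheorem17 :
  let ds := [:: 1; 2; 2; 2; 2; 2; 4; 4; 4; 4; 4; 6; 8; 8; 8; 8; 8; 8; 16]%N in
  (exists G : 'M['F_2]_19,
      G \in unitmx /\ forall i : 'I_19, Dmin (linker G) i = nth 0%N ds i)
  /\ Rle (Rmult (Rinv (INR 19)) (Rsum_ord (fun i : 'I_19 => logb 19 (INR (nth 0%N ds i)))))
         (Emax 19).
Proof.
move=> ds.
have Hinj := @inj_of_pos 19 G0 Hpos.
split.
  by exists G0; split; [exact: inj_unit | exact: HD].
pose g : kernel 19 := perm Hinj.
apply: Rle_trans (@foldr_Rmax _ (fun g : kernel 19 => exponent (fun u => g u)) (enum (kernel 19)) g _); last first.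
  by rewrite mem_enum.
have -> : (fun u => g u) = linker G0.
  by apply: functional_extensionality => u; rewrite permE.
apply: Req_le; rewrite /exponent /Rsum_ord; do 2 f_equal.
by apply: eq_map => i; rewrite HD.
Qed.
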